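(* Let $\lambda\in\mathbb{R}$ and let $\mu$ be a (nonzero, finite, positive) measure on $\mathbb{R}$ with support contained in $(-\infty,\lambda]$. Then $l\mapsto-\frac{1}{s_\mu(l)}$ is convex on $(\lambda,\infty)$, where $s_\mu(l)=\int\frac{1}{l-x}\mu(dx)$. If the support of $\mu$ is not a singleton, this map is strictly convex.
   Context: $s_\mu$ is the Stieltjes transform of $\mu$, defined for $l$ outside the support of $\mu$. *)

(* Defs.v *)
From HB Require Import structures.
From mathcomp Require Import all_boot all_order all_algebra.
From mathcomp Require Import all_classical all_reals all_analysis.
Set Implicit Arguments. Unset Strict Implicit. Unset Printing Implicit Defensive.
Import Order.TTheory GRing.Theory Num.Theory.
Import numFieldNormedType.Exports.
Local Open Scope classical_set_scope.
Local Open Scope ring_scope.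

Definition msupport (R : realType) (mu : {measure set R -> \bar R}) : set R :=
  [set x | forall e : R, 0 < e -> (0 < mu (ball x e))%E].

Definition stieltjes (R : realType) (mu : {measure set R -> \bar R}) (l : R) : R :=
  Rintegral mu setT (fun x => (l - x)^-1).

Definition convex_on (R : realType) (I : set R) (f : R -> R) : Prop :=
  forall x y t, I x -> I y -> 0 <= t <= 1 ->
    f (t * x + (1 - t) * y) <= t * f x + (1 - t) * f y.

Definition strictly_convex_on (R : realType) (I : set R) (f : R -> R) : Prop :=
  forall x y t, I x -> I y -> x != y -> 0 < t < 1 ->
    f (t * x + (1 - t) * y) < t * f x + (1 - t) * f y.

(* Main.v *)
Require Import Defs.
From HB Require Import structures.
From mathcomp Require Import all_boot all_order all_algebra.
From mathcomp Require Import all_classical all_reals all_analysis.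
From mathcomp Require Import measurable_realfun.
From mathcomp Require Import lra ring.
Import Order.TTheory GRing.Theory Num.Theory.
Import numFieldNormedType.Exports.
Local Open Scope classical_set_scope.
Local Open Scope ring_scope.

Section S.
Context {R : realType}.

Lemma measurable_inv : measurable_fun [set: R] (@GRing.inv R).
Proof.
have -> : [set: R] = [set x | x != 0] `|` [set 0].
  apply/seteqP; split=> x //= _; case: (eqVneq x 0) => ?; by [right|left].
apply/measurable_funU; [apply: open_measurable; exact: open_neq|by []|split].
  apply: open_continuous_measurable_fun; first exact: open_neq.
  by move=> x /set_mem /= x0; exact: inv_continuous.
move=> _ B mB.
have [B0|B0] := pselect (B (0:R)^-1).
  rewrite (_ : _ `&` _ = [set 0]) //.
  by apply/seteqP; split=> x /=; [case|move=> ->].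
rewrite (_ : _ `&` _ = set0) //.
by apply/seteqP; split=> x //= [-> ].
Qed.

Variable mu : {finite_measure set R -> \bar R}.

Lemma Rintegral_gt0 (D A : set R) (h : R -> R) : measurable D -> measurable A ->
  mu.-integrable D (EFin \o h) -> (forall x, D x -> 0 <= h x) ->
  (forall x, D x -> ~ A x -> 0 < h x) -> (0 < mu (D `\` A))%E ->
  0 < \int[mu]_(x in D) h x.
Proof.
move=> mD mA ih h0 hp muDA.
rewrite lt_def Rintegral_ge0 // andbT; apply/eqP => H.
have fin := integrable_fin_num mD ih.
have I0 : (\int[mu]_(x in D) (EFin \o h) x = 0)%E.
  by rewrite -(fineK fin) /= -/(Rintegral _ _ _) H.
have : (\int[mu]_(x in D) `|(EFin \o h) x| = 0)%E.
  rewrite -I0; apply: eq_integral => x /set_mem xD.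
  by rewrite gee0_abs //= lee_fin h0.
move/(ae_eq_integral_abs _ mD (proj1 (integrableP _ _ _ ih))).
case=> N [mN N0 sub].
have : (mu (D `\` A) <= mu N)%E.
  apply: (@le_measure _ _ _ mu); rewrite ?inE //.
    exact: measurableD.
  move=> x [Dx nAx]; apply: sub => /= H1.
  by move: (hp x Dx nAx); case: (H1 Dx) => ->; rewrite ltxx.
by rewrite N0 leNgt muDA.
Qed.

Lemma null_right (lam : R) :
  (forall x, lam < x -> exists2 e : R, 0 < e & mu (ball x e) = 0%E) ->
  mu `]lam, +oo[%classic = 0%E.
Proof.
move=> hyp.
have key x0 : lam < x0 -> forall b, mu.-negligible `[x0, b].
  move=> lx0 b; apply: contrapT => nb.
  pose A := [set t | x0 <= t /\ mu.-negligible `[x0, t]].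
  have ubA : ubound A b.
    move=> t [x0t negt]; rewrite leNgt; apply/negP => bt; apply: nb.
    apply: negligibleS negt => y /=; rewrite !in_itv /= => /andP[-> yb] /=.
    exact: le_trans yb (ltW bt).
  have A0 : A x0.
    have [e e0 me] := hyp x0 lx0.
    split => //; exists (ball x0 e); split => //; first exact: measurable_ball.
    move=> y /=; rewrite in_itv /= => yx; rewrite (_ : y = x0); first exact: ballxx.
    by apply/eqP; rewrite eq_le andbC.
  have hsA : has_sup A by split; [exists x0|exists b].
  have x0s : x0 <= sup A by exact: sup_upper_bound.
  have [e e0 me] := hyp (sup A) (lt_le_trans lx0 x0s).
  have [t [x0t negt] st] := sup_adherent e0 hsA.
  have : A (sup A + e / 2).
    split; first by apply: le_trans x0s _; rewrite lerDl divr_ge0 // ltW.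
    have nb2 : mu.-negligible (ball (sup A) e).
      by exists (ball (sup A) e); split => //; exact: measurable_ball.
    apply: negligibleS (negligibleU negt nb2) => y /=; rewrite !in_itv /=.
    move=> /andP[x0y ys].
    have [yt|ty] := leP y t; first by left; rewrite x0y.
    right; rewrite -ball_normE /= ltr_norml; apply/andP; split.
      lra.
    by rewrite ltrBlDr addrC -ltrBlDr; apply: lt_trans st ty.
  move/(sup_upper_bound hsA); rewrite gerDl leNgt => /negP; apply.
  by rewrite divr_gt0.
have : mu.-negligible (\bigcup_n \bigcup_m `[lam + n.+1%:R^-1, lam + m%:R]%classic).
  apply: negligible_bigcup => n; apply: negligible_bigcup => m; apply: key.
  by rewrite ltrDl invr_gt0.
move/(negligibleS _) => /(_ `]lam, +oo[%classic) H.
apply/negligibleP => //; apply: H => x /=; rewrite in_itv /= andbT => lx.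
have xl0 : 0 < x - lam by rewrite subr_gt0.
exists (Num.truncn (x - lam)^-1) => //; exists (Num.truncn (x - lam)).+1 => //=.
rewrite in_itv /=; apply/andP; split.
  rewrite -lerBrDl; apply: ltW; rewrite -[X in _ < X]invrK ltf_pV2 //.
    exact: truncnS_gt.
  by rewrite posrE ltr0Sn.
  by rewrite posrE invr_gt0.
by rewrite -lerBlDl ltW // truncnS_gt.
Qed.

Lemma bounded_of (A : set R) (g : R -> R) (M : R) :
  (forall x, A x -> `|g x| <= M) -> [bounded g x | x in A].
Proof.
move=> H; rewrite /bounded_near; near=> N => t At /=.
apply: le_trans (H t At) _; near: N; exact: nbhs_pinfty_ge (num_real M).
Unshelve. all: end_near. Qed.

Definition good (A : set R) (g : R -> R) :=
  measurable_fun A g /\ exists M, forall x, A x -> `|g x| <= M.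

Lemma good_int A g : measurable A -> good A g -> mu.-integrable A (EFin \o g).
Proof.
move=> mA [mg [M hM]]; apply: measurable_bounded_integrable => //.
  by rewrite ltey_eq fin_num_measure.
exact: bounded_of hM.
Qed.

Lemma goodD A f g : measurable A -> good A f -> good A g -> good A (fun x => f x + g x).
Proof.
move=> mA [mf [M hM]] [mg [N hN]]; split; first exact: measurable_funD.
exists (M + N) => x Ax; apply: le_trans (ler_normD _ _) _.
by apply: lerD; [exact: hM|exact: hN].
Qed.

Lemma goodZ A f k : measurable A -> good A f -> good A (fun x => k * f x).
Proof.
move=> mA [mf [M hM]]; split.
  by apply: measurable_funM => //; exact: measurable_cst.
exists (`|k| * M) => x Ax; rewrite normrM; apply: ler_wpM2l => //; exact: hM.
Qed.

Lemma goodM A f g : measurable A -> good A f -> good A g -> good A (fun x => f x * g x).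
Proof.
move=> mA [mf [M hM]] [mg [N hN]]; split; first exact: measurable_funM.
exists (M * N) => x Ax; rewrite normrM; apply: ler_pM => //; [exact: hM|exact: hN].
Qed.

Variable lam : R.
Let D := `]-oo, lam]%classic.
Let mD : measurable D. Proof. exact: measurable_itv. Qed.

Lemma Dle x : D x -> x <= lam.
Proof. by rewrite /D /= in_itv. Qed.

Lemma a_good l : lam < l -> good D (fun x => (l - x)^-1).
Proof.
move=> ll; split.
  apply: measurable_funTS; apply: measurableT_comp; first exact: measurable_inv.
  by apply: measurable_funB => //; exact: measurable_cst.
exists (l - lam)^-1 => x /Dle xl.
rewrite ger0_norm; last by rewrite invr_ge0 subr_ge0 ltW // (le_lt_trans xl).
by rewrite lef_pV2 ?posrE ?subr_gt0 ?(le_lt_trans xl) // lerD2l lerN2.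
Qed.


Hypothesis muR : mu `]lam, +oo[%classic = 0%E.
Hypothesis mu0 : mu setT != 0%E.

Lemma stD l : lam < l -> stieltjes mu l = \int[mu]_(x in D) (l - x)^-1.
Proof.
move=> ll; rewrite /stieltjes [RHS]Rintegral_mkcond /Rintegral; congr fine.
apply: ae_eq_integral => //.
- apply/measurable_EFinP; apply: measurableT_comp; first exact: measurable_inv.
  by apply: measurable_funB => //; exact: measurable_cst.
- apply/measurable_EFinP; apply/(measurable_restrictT _ mD); exact: (proj1 (a_good l ll)).
- exists `]lam,+oo[%classic; split; [exact: measurable_itv|exact: muR|].
  move=> x /= H; rewrite in_itv /= andbT ltNge; apply/negP => xl; apply: H => _.
  by rewrite patchE mem_set // /D /= in_itv.
Qed.

Lemma muD : (0 < mu D)%E.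
Proof.
have : (mu setT <= mu D + mu `]lam, +oo[%classic)%E.
  rewrite (_ : setT = D `|` `]lam, +oo[%classic); last first.
    apply/seteqP; split => x // _; rewrite /D /= !in_itv /= andbT.
    by case: (leP x lam) => _; [left|right].
  apply: measureU2 => //; exact: measurable_itv.
rewrite muR adde0; apply: lt_le_trans.
by rewrite lt0e mu0 measure_ge0.
Qed.

Let S l := \int[mu]_(x in D) (l - x)^-1.
Let Q l := \int[mu]_(x in D) ((l - x)^-1 ^+ 2).

Lemma S_pos l : lam < l -> 0 < S l.
Proof.
move=> ll; apply: (@Rintegral_gt0 D set0) => //.
- exact: good_int (a_good l ll).
- move=> x /Dle xl; rewrite invr_ge0 subr_ge0 ltW //; exact: le_lt_trans ll.
- move=> x /Dle xl _; rewrite invr_gt0 subr_gt0; exact: le_lt_trans ll.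
- by rewrite setD0 muD.
Qed.


Definition hh (l w al x : R) :=
  al ^+ 2 * (l - x)^-1 + ((1 - 2 * al) * (w - x)^-1 + (l - w) * ((w - x)^-1 ^+ 2)).

Lemma int_a l : lam < l -> mu.-integrable D (EFin \o (fun x => (l - x)^-1)).
Proof. by move=> ll; apply: good_int => //; exact: a_good. Qed.

Lemma int_a2 l : lam < l -> mu.-integrable D (EFin \o (fun x => (l - x)^-1 ^+ 2)).
Proof.
move=> ll; apply: good_int => //; rewrite (_ : (fun x => _) = (fun x => (l - x)^-1 * (l - x)^-1)).
  by apply: goodM => //; exact: a_good.
by apply/funext => x; rewrite expr2.
Qed.

Lemma hh_eq l w : lam < l -> lam < w ->
  \int[mu]_(x in D) hh l w (S w / S l) x = S w + (l - w) * Q w - S w ^+ 2 / S l.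
Proof.
move=> ll lw; rewrite /hh.
have Sl0 : S l != 0 by rewrite gt_eqF // S_pos.
rewrite RintegralD //; last 2 first.
- by apply: good_int => //; apply: goodZ => //; exact: a_good.
- apply: good_int => //; apply: goodD => //; apply: goodZ => //; first exact: a_good.
  rewrite (_ : (fun x => _) = (fun x => (w - x)^-1 * (w - x)^-1)).
    by apply: goodM => //; exact: a_good.
  by apply/funext => x; rewrite expr2.
rewrite RintegralD //; last 2 first.
- by apply: good_int => //; apply: goodZ => //; exact: a_good.
- apply: good_int => //; apply: goodZ => //.
  rewrite (_ : (fun x => _) = (fun x => (w - x)^-1 * (w - x)^-1)).
    by apply: goodM => //; exact: a_good.
  by apply/funext => x; rewrite expr2.
rewrite !RintegralZl //; [|exact: int_a|exact: int_a2|exact: int_a].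
rewrite -/(S l) -/(S w) -/(Q w).
by field.
Qed.

Lemma hh_pt l w al x : lam < l -> lam < w -> D x ->
  hh l w al x = (l - x)^-1 * (al - (l - x) / (w - x)) ^+ 2.
Proof.
move=> ll lw /Dle xl; rewrite /hh.
have lx : l - x != 0 by rewrite gt_eqF // subr_gt0 (le_lt_trans xl).
have wx : w - x != 0 by rewrite gt_eqF // subr_gt0 (le_lt_trans xl).
by field; rewrite wx lx.
Qed.

Lemma hh_ge0 l w al x : lam < l -> lam < w -> D x -> 0 <= hh l w al x.
Proof.
move=> ll lw Dx; rewrite hh_pt //; apply: mulr_ge0; last exact: sqr_ge0.
by rewrite invr_ge0 subr_ge0 ltW // (le_lt_trans (Dle _ Dx)).
Qed.

Lemma hh_gt0 l w al x : lam < l -> lam < w -> D x -> al != (l - x) / (w - x) ->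
  0 < hh l w al x.
Proof.
move=> ll lw Dx ne; rewrite hh_pt //; apply: mulr_gt0.
  by rewrite invr_gt0 subr_gt0 (le_lt_trans (Dle _ Dx)).
by rewrite lt_def sqr_ge0 andbT sqrf_eq0 subr_eq0.
Qed.

Lemma supp_single u0 : mu (~` [set u0]) = 0%E -> msupport mu = [set u0].
Proof.
have mC : measurable (~` [set u0]) by apply: measurableC; exact: measurable_set1.
move=> H; apply/seteqP; split => x /=.
- move=> Hx; apply: contrapT => xu.
  have xu0 : 0 < `|x - u0| by rewrite normr_gt0 subr_eq0; apply/eqP.
  have := (Hx : forall e, 0 < e -> (0 < mu (ball x e))%E) _ xu0.
  have : (mu (ball x `|x - u0|%R) <= mu (~` [set u0]))%E.
    apply: le_measure; rewrite ?inE //; first exact: measurable_ball.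
    move=> y; rewrite -ball_normE /= => xy yu; move: xy; rewrite yu ltxx //.
  by rewrite H => /le_lt_trans h /h; rewrite ltxx.
- move=> -> e e0.
  have : (mu setT <= mu (ball u0 e) + mu (~` ball u0 e))%E.
    rewrite -(setUCr (ball u0 e)); apply: measureU2; first exact: measurable_ball.
    by apply: measurableC; exact: measurable_ball.
  have : (mu (~` ball u0 e) <= mu (~` [set u0]))%E.
    apply: le_measure; rewrite ?inE //.
      by apply: measurableC; exact: measurable_ball.
    by move=> y yb yu; apply: yb; rewrite yu; exact: ballxx.
  rewrite H => h1 h2; have h3 := le_trans h2 (leeD2l _ h1).
  rewrite adde0 in h3; apply: lt_le_trans h3.
  by rewrite lt0e mu0 measure_ge0.
Qed.


Lemma a2_good l : lam < l -> good D (fun x => (l - x)^-1 ^+ 2).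
Proof.
move=> ll; rewrite (_ : (fun x => _) = (fun x => (l - x)^-1 * (l - x)^-1)).
  by apply: goodM => //; exact: a_good.
by apply/funext => x; rewrite expr2.
Qed.

Lemma hh_good l w al : lam < l -> lam < w -> good D (hh l w al).
Proof.
move=> ll lw; rewrite /hh; apply: goodD => //.
  by apply: goodZ => //; exact: a_good.
apply: goodD => //; apply: goodZ => //; [exact: a_good|exact: a2_good].
Qed.

Lemma tangent_gen l w : lam < l -> lam < w ->
  0 <= S w + (l - w) * Q w - S w ^+ 2 / S l ->
  (- (S w)^-1 - (l - w) * (Q w / S w ^+ 2) <= - (S l)^-1) /\
  (0 < S w + (l - w) * Q w - S w ^+ 2 / S l ->
   - (S w)^-1 - (l - w) * (Q w / S w ^+ 2) < - (S l)^-1).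
Proof.
move=> ll lw I0.
have Sl := @S_pos l ll; have Sw := @S_pos w lw.
have Sl0 : S l != 0 by rewrite gt_eqF.
have Sw0 : S w != 0 by rewrite gt_eqF.
have E : - (S l)^-1 - (- (S w)^-1 - (l - w) * (Q w / S w ^+ 2)) =
   (S w + (l - w) * Q w - S w ^+ 2 / S l) / S w ^+ 2.
  by field; rewrite Sl0 Sw0.
split; first by rewrite -subr_ge0 E divr_ge0 // sqr_ge0.
by move=> I1; rewrite -subr_gt0 E divr_gt0 // exprn_gt0.
Qed.

Lemma tangent l w : lam < l -> lam < w ->
  - (S w)^-1 - (l - w) * (Q w / S w ^+ 2) <= - (S l)^-1.
Proof.
move=> ll lw; apply: (proj1 (@tangent_gen l w ll lw _)).
rewrite -hh_eq //; apply: Rintegral_ge0 => x Dx; exact: hh_ge0.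
Qed.

Lemma tangent_strict l w : lam < l -> lam < w -> l != w ->
  ~ (exists a : R, msupport mu = [set a]) ->
  - (S w)^-1 - (l - w) * (Q w / S w ^+ 2) < - (S l)^-1.
Proof.
move=> ll lw lnw nsing; apply: (proj2 (@tangent_gen l w ll lw _)).
  rewrite -hh_eq //; apply: Rintegral_ge0 => x Dx; exact: hh_ge0.
rewrite -hh_eq //.
set al := S w / S l.
have ih : mu.-integrable D (EFin \o hh l w al) by apply: good_int => //; exact: hh_good.
have hge0 : forall x, D x -> 0 <= hh l w al x by move=> x Dx; exact: hh_ge0.
case: (pselect (exists u0, D u0 /\ al = (l - u0) / (w - u0))) => [[u0 [Du0 Hu0]]|Hn].
- apply: (@Rintegral_gt0 D [set u0] (hh l w al) mD); [exact: measurable_set1|exact: ih|exact: hge0| |].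
  + move=> x Dx xu; apply: hh_gt0 => //; apply/negP => /eqP Hx; apply: xu.
    have xl := Dle _ Dx; have ul := Dle _ Du0.
    have lx : l - x != 0 by rewrite gt_eqF // subr_gt0 (le_lt_trans xl).
    have wx : w - x != 0 by rewrite gt_eqF // subr_gt0 (le_lt_trans xl).
    have lu : l - u0 != 0 by rewrite gt_eqF // subr_gt0 (le_lt_trans ul).
    have wu : w - u0 != 0 by rewrite gt_eqF // subr_gt0 (le_lt_trans ul).
    move: Hu0; rewrite Hx => /eqP; rewrite eqr_div // => /eqP E'.
    have : (l - w) * (x - u0) = 0.
      transitivity ((l - x) * (w - u0) - (l - u0) * (w - x)); first by ring.
      by rewrite E' subrr.
    by move/eqP; rewrite mulf_eq0 subr_eq0 (negbTE lnw) /= subr_eq0 => /eqP.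
  + rewrite lt0e measure_ge0 andbT; apply/negP => /eqP H0; apply: nsing.
    exists u0; apply: supp_single; apply/eqP; rewrite -measure_le0.
    have : (mu (~` [set u0]) <= mu (D `\` [set u0]) + mu `]lam, +oo[%classic)%E.
      apply: le_trans; last first.
        apply: measureU2; first by apply: measurableD => //; exact: measurable_set1.
        exact: measurable_itv.
      apply: le_measure; rewrite ?inE //.
      * by apply: measurableC; exact: measurable_set1.
      * apply: measurableU; last exact: measurable_itv.
        by apply: measurableD => //; exact: measurable_set1.
      * move=> y /= yu; rewrite /D /= !in_itv /= andbT.
        by case: (leP y lam) => _; [left|right].
    by rewrite H0 muR adde0.
- apply: (@Rintegral_gt0 D set0 (hh l w al) mD); [by []|exact: ih|exact: hge0| |].
  + move=> x Dx _; apply: hh_gt0 => //; apply/negP => /eqP Hx; apply: Hn.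
    by exists x.
  + by rewrite setD0 muD.
Qed.

End S.

Section Comb.
Context {R : realType}.

Lemma inI (lam x : R) : `]lam, +oo[%classic x -> lam < x.
Proof. by rewrite /= in_itv /= andbT. Qed.

Lemma comb (lam : R) (F C : R -> R) :
  (forall l w, lam < l -> lam < w -> F w - (l - w) * C w <= F l) ->
  convex_on `]lam, +oo[ F.
Proof.
move=> H x y t /inI Ix /inI Iy /andP[t0 t1].
have Iz : lam < t * x + (1 - t) * y.
  have hm : lam < Num.min x y by rewrite lt_min Ix Iy.
  have g1 : 0 <= t * (x - Num.min x y).
    by apply: mulr_ge0; rewrite ?subr_ge0 ?ge_min ?lexx //; lra.
  have g2 : 0 <= (1 - t) * (y - Num.min x y).
    by apply: mulr_ge0; rewrite ?subr_ge0 ?ge_min ?lexx ?orbT //; lra.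
  nra.
have h1 := H _ _ Ix Iz; have h2 := H _ _ Iy Iz.
set z := t * x + (1 - t) * y in h1 h2 *.
set c := C z in h1 h2.
have e : c * (t * (x - z) + (1 - t) * (y - z)) = 0 by rewrite /z; ring.
have p1 : 0 <= t * (F x - (F z - (x - z) * c)) by apply: mulr_ge0; rewrite ?subr_ge0.
have p2 : 0 <= (1 - t) * (F y - (F z - (y - z) * c)) by apply: mulr_ge0; rewrite ?subr_ge0.
nra.
Qed.

Lemma comb_strict (lam : R) (F C : R -> R) :
  (forall l w, lam < l -> lam < w -> l != w -> F w - (l - w) * C w < F l) ->
  strictly_convex_on `]lam, +oo[ F.
Proof.
move=> H x y t /inI Ix /inI Iy xy /andP[t0 t1].
have Iz : lam < t * x + (1 - t) * y.
  have hm : lam < Num.min x y by rewrite lt_min Ix Iy.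
  have g1 : 0 <= t * (x - Num.min x y).
    by apply: mulr_ge0; rewrite ?subr_ge0 ?ge_min ?lexx //; lra.
  have g2 : 0 <= (1 - t) * (y - Num.min x y).
    by apply: mulr_ge0; rewrite ?subr_ge0 ?ge_min ?lexx ?orbT //; lra.
  nra.
have xy' : x - y != 0 by rewrite subr_eq0.
have xz : x != t * x + (1 - t) * y.
  apply/negP => /eqP e.
  have : (1 - t) * (x - y) = 0.
    have -> : (1 - t) * (x - y) = x - (t * x + (1 - t) * y) by ring.
    by rewrite -e subrr.
  by move/eqP; rewrite mulf_eq0 (negbTE xy') orbF subr_eq0 eq_sym (lt_eqF t1).
have yz : y != t * x + (1 - t) * y.
  apply/negP => /eqP e.
  have : t * (x - y) = 0.
    have -> : t * (x - y) = (t * x + (1 - t) * y) - y by ring.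
    by rewrite -e subrr.
  by move/eqP; rewrite mulf_eq0 (negbTE xy') orbF (gt_eqF t0).
have h1 := H _ _ Ix Iz xz; have h2 := H _ _ Iy Iz yz.
set z := t * x + (1 - t) * y in h1 h2 *.
set c := C z in h1 h2.
have e : c * (t * (x - z) + (1 - t) * (y - z)) = 0 by rewrite /z; ring.
have p1 : 0 < t * (F x - (F z - (x - z) * c)) by apply: mulr_gt0; rewrite ?subr_gt0.
have p2 : 0 < (1 - t) * (F y - (F z - (y - z) * c)) by apply: mulr_gt0; rewrite ?subr_gt0.
nra.
Qed.
End Comb.

Theorem lemma3p2 (R : realType) (lam : R) (mu : {finite_measure set R -> \bar R}) :
  (mu setT != 0)%E ->
  msupport mu `<=` `]-oo, lam] ->
  convex_on `]lam, +oo[ (fun l => - (stieltjes mu l)^-1) /\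
  (~ (exists a : R, msupport mu = [set a]) ->
   strictly_convex_on `]lam, +oo[ (fun l => - (stieltjes mu l)^-1)).
Proof.
move=> mu0 hsupp.
have hyp : forall x, lam < x -> exists2 e : R, 0 < e & mu (ball x e) = 0%E.
  move=> x lx; apply: contrapT => H.
  have : msupport mu x.
    move=> e e0; rewrite lt0e measure_ge0 andbT; apply/negP => /eqP H0.
    by apply: H; exists e.
  move/hsupp; rewrite /= in_itv /= => xl.
  by move: (lt_le_trans lx xl); rewrite ltxx.
have muR := @null_right R mu lam hyp.
split.
  apply: (@comb _ lam _ (fun w => \int[mu]_(x in `]-oo, lam]) (w - x)^-1 ^+ 2 /
     (\int[mu]_(x in `]-oo, lam]) (w - x)^-1) ^+ 2)) => l w ll lw.
  rewrite /= !(@stD R mu lam muR) //; exact: tangent.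
move=> nsing.
apply: (@comb_strict _ lam _ (fun w => \int[mu]_(x in `]-oo, lam]) (w - x)^-1 ^+ 2 /
   (\int[mu]_(x in `]-oo, lam]) (w - x)^-1) ^+ 2)) => l w ll lw lw'.
rewrite /= !(@stD R mu lam muR) //; exact: tangent_strict.
Qed.
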